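(* Let $n\ge2$, let $\sigma,\tau\in S_n$, and let $u,v,w\in\{1,\dots,n\}$. Then: 1. $M(\sigma,u,0)M(\tau,v,0)=M(\tau\sigma,w,0)$. 2. $M(\sigma,u,1)M(\tau,v,0)=M(\tau\sigma,u,1)$. 3. $M(\sigma,u,0)M(\tau,v,1)=M(\tau\sigma,\sigma^{-1}(v),1)$. 4. If $\sigma^{-1}(v)=u$, then $M(\sigma,u,1)M(\tau,v,1)=M(\tau\sigma,w,0)$. 5. If $\sigma^{-1}(v)\ne u$, then $M(\sigma,u,1)M(\tau,v,1)=M(\eta,\sigma^{-1}(v),1)$, where $\eta\in S_n$ is defined by $$\eta(j)=\begin{cases}\tau\sigma(j),& j\notin\{u,\sigma^{-1}(v)\},\\ \tau\sigma(u),& j=\sigma^{-1}(v),\\ \tau(v),& j=u.\end{cases}$$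
   Context: - $e_j$ is the $j$-th standard basis column vector of $\mathbb{Z}^n$. - $r_h$ is the row vector $\big((-1)^h,(-1)^{h+1},\dots,(-1)^{h+n-1}\big)$, whose $k$-th entry is $(-1)^{h+k-1}$. - Permutations are composed as functions: $(\tau\sigma)(j)=\tau(\sigma(j))$. - For $\sigma\in S_n$, $h\in\{1,\dots,n\}$ and $\epsilon\in\{0,1\}$, $M(\sigma,h,\epsilon)$ is the $n\times n$ matrix $$M(\sigma,h,\epsilon)=\sum_{j=1}^n(-1)^{j+\sigma(j)}e_je_{\sigma(j)}^T+\epsilon\Big((-1)^{h+\sigma(h)+1}e_he_{\sigma(h)}^T+e_hr_h\Big).$$ - Thus $M(\sigma,h,0)$ is the signed permutation matrix with entry $(-1)^{j+\sigma(j)}$ at position $(j,\sigma(j))$ and zeros elsewhere; it does not depend on $h$. - $M(\sigma,h,1)$ is obtained from $M(\sigma,h,0)$ by replacing its $h$-th row with $r_h$. *)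

(* Defs.v *)
From HB Require Import structures.
From mathcomp Require Import all_boot all_order all_fingroup all_algebra.
Set Implicit Arguments. Unset Strict Implicit. Unset Printing Implicit Defensive.
Import GRing.Theory.
Local Open Scope ring_scope.

(* Indices are 0-based ordinals 'I_n; index j here corresponds to j+1 in the
   paper.  Parities of i+j (and h+k-1 vs h'+k'+1) are invariant under this shift. *)

Definition evec (n : nat) (j : 'I_n) : 'cV[int]_n := \col_(i < n) (i == j)%:R.

Definition rvec (n : nat) (h : 'I_n) : 'rV[int]_n :=
  \row_(k < n) (-1) ^+ (h + k + 1)%N.

Definition Mmat (n : nat) (s : 'S_n) (h : 'I_n) (eps : bool) : 'M[int]_n :=
  \sum_(j < n) (-1) ^+ (j + s j)%N *: (evec j *m (evec (s j))^T)
  + (eps%:R : int) *: ((-1) ^+ (h + s h + 1)%N *: (evec h *m (evec (s h))^T)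
                       + evec h *m rvec h).

(* Composition as functions: (tau o sigma)(j) = tau (sigma j).
   In mathcomp, (sigma * tau)%g j = tau (sigma j) (lemma permM). *)
Definition comp_perm (n : nat) (tau sigma : 'S_n) : 'S_n := (sigma * tau)%g.

(* Main.v *)
Require Import Defs.
From mathcomp Require Import all_boot all_fingroup all_algebra.
From mathcomp Require Import ring.
Set Implicit Arguments.
Import GRing.Theory.
Local Open Scope ring_scope.

Definition Pe n (s : 'S_n) (i k : 'I_n) : int := if s i == k then (-1) ^+ (i + k)%N else 0.

Lemma outerE n (j b i k : 'I_n) : (evec j *m (evec b)^T) i k = ((i == j) && (k == b))%:R.
Proof. by rewrite !mxE big_ord1 !mxE; case: (i == j); case: (k == b); rewrite ?mulr0 ?mulr1. Qed.

Lemma outerrE n (h i k : 'I_n) : (evec h *m rvec h) i k = (i == h)%:R * (-1) ^+ (h + k + 1)%N.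
Proof. by rewrite !mxE big_ord1 !mxE. Qed.

Lemma MmatE n (s : 'S_n) h (e : bool) i k :
  Mmat s h e i k = Pe s i k + e%:R * ((i == h)%:R * ((-1) ^+ (h + k + 1)%N - Pe s h k)).
Proof.
rewrite /Mmat !mxE summxE.
rewrite !big_ord1 !mxE (bigD1 i) //= big1 ?addr0; last first.
  by move=> j /negbTE ji; rewrite !mxE big_ord1 !mxE eq_sym ji mul0r mulr0.
rewrite !mxE big_ord1 !mxE eqxx /Pe.
rewrite !addn1 !exprS; case: e; rewrite /= ?mul0r ?mul1r ?addr0; 
  repeat (case: eqP => //= ?; subst); first [ring | congruence].

Qed.

Definition sg (b : bool) : int := if b then -1 else 1.
Lemma sgE (n : nat) : (-1) ^+ n = sg (odd n) :> int.
Proof. by rewrite -signr_odd; case: (odd n). Qed.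

Ltac sgn := rewrite ?sgE ?oddD ?addn1 /=;
  repeat match goal with |- context [odd ?x] => case: (odd x) end;
  rewrite /sg /=; ring.

Lemma sumP n (s : 'S_n) i (X : 'I_n -> int) :
  \sum_(j < n) Pe s i j * X j = (-1) ^+ (i + s i)%N * X (s i).
Proof.
rewrite (bigD1 (s i)) //= big1 ?addr0; first by rewrite /Pe eqxx.
by move=> j /negbTE; rewrite /Pe eq_sym => ->; rewrite mul0r.
Qed.

Lemma sumI n (v : 'I_n) (X : 'I_n -> int) :
  \sum_(j < n) X j * (j == v)%:R = X v.
Proof.
rewrite (bigD1 v) //= big1 ?addr0; first by rewrite eqxx mulr1.
by move=> j /negbTE ->; rewrite mulr0.
Qed.

Lemma sumR n (t : 'S_n) (u k : 'I_n) :
  \sum_(j < n) (-1) ^+ (u + j + 1)%N * Pe t j k = (-1) ^+ (u + k + 1)%N.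
Proof.
rewrite (bigD1 ((t^-1)%g k)) //= big1 ?addr0.
  rewrite /Pe permKV eqxx. sgn.
move=> j ne; rewrite /Pe; case: eqP; last by rewrite mulr0.
by move=> E; move: ne; rewrite -E permK eqxx.
Qed.

Lemma prodE n (s t : 'S_n) u v (ea eb : bool) i k :
  (Mmat s u ea *m Mmat t v eb) i k =
  (-1) ^+ (i + s i)%N * Mmat t v eb (s i) k
  + ea%:R * ((i == u)%:R * ((-1) ^+ (u + k + 1)%N
      + eb%:R * ((-1) ^+ (u + v + 1)%N * ((-1) ^+ (v + k + 1)%N - Pe t v k))
      - (-1) ^+ (u + s u)%N * Mmat t v eb (s u) k)).
Proof.
rewrite mxE.
under eq_bigr do rewrite MmatE.
set F := fun j => Mmat t v eb j k.
have -> : \sum_(j < n) (Pe s i j + ea%:R * ((i == u)%:R * ((-1) ^+ (u + j + 1)%N - Pe s u j))) * F j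
  = \sum_(j < n) Pe s i j * F j + ea%:R * ((i == u)%:R * (\sum_(j < n) (-1) ^+ (u + j + 1)%N * F j
       - \sum_(j < n) Pe s u j * F j)).
  rewrite -sumrB !mulr_sumr -big_split; apply: eq_bigr => j _ /=; ring.
rewrite !sumP; congr (_ + _ * (_ * (_ - _))).
rewrite /F; under eq_bigr do rewrite MmatE.
have -> : \sum_(j < n) (-1) ^+ (u + j + 1)%N * (Pe t j k + eb%:R * ((j == v)%:R * ((-1) ^+ (v + k + 1)%N - Pe t v k)))
  = \sum_(j < n) (-1) ^+ (u + j + 1)%N * Pe t j k + eb%:R * ((-1) ^+ (u + v + 1)%N * ((-1) ^+ (v + k + 1)%N - Pe t v k)).
  rewrite -(sumI v (fun j => (-1) ^+ (u + j + 1)%N * ((-1) ^+ (v + k + 1)%N - Pe t v k))).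
  rewrite !mulr_sumr -big_split; apply: eq_bigr => j _ /=; ring.
by rewrite sumR.
Qed.

Ltac simp s t := rewrite ?permM ?(inj_eq (@perm_inj _ s)) ?(inj_eq (@perm_inj _ t)) ?permK ?permKV
            ?eqxx /= ?mul0r ?mulr0 ?addr0 ?add0r ?mul1r ?mulr1 ?subr0.

Ltac fin s t := rewrite /comp_perm /Pe; simp s t;
  repeat (case: eqP => //= ?; subst; simp s t);
  first [sgn | congruence | idtac].

Theorem mainTheorem11 (n : nat) (Hn : (2 <= n)%N) (sigma tau : 'S_n) (u v w : 'I_n) :
  [/\ Mmat sigma u false *m Mmat tau v false = Mmat (comp_perm tau sigma) w false,
      Mmat sigma u true *m Mmat tau v false = Mmat (comp_perm tau sigma) u true,
      Mmat sigma u false *m Mmat tau v true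
        = Mmat (comp_perm tau sigma) ((sigma^-1)%g v) true,
      ((sigma^-1)%g v = u ->
         Mmat sigma u true *m Mmat tau v true = Mmat (comp_perm tau sigma) w false)
    & ((sigma^-1)%g v <> u ->
         forall eta : 'S_n,
           (forall j : 'I_n,
              eta j = (if j == u then tau v
                       else if j == (sigma^-1)%g v then comp_perm tau sigma u
                       else comp_perm tau sigma j)) ->
           Mmat sigma u true *m Mmat tau v true = Mmat eta ((sigma^-1)%g v) true)].
Proof.
have [x ->] : exists x, v = sigma x by exists ((sigma^-1)%g v); rewrite permKV.
rewrite permK.
split.
- apply/matrixP => i k; rewrite prodE !MmatE. fin sigma tau.
- apply/matrixP => i k; rewrite prodE !MmatE. fin sigma tau.
- apply/matrixP => i k; rewrite prodE !MmatE. fin sigma tau.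
- move=> xu; subst x; apply/matrixP => i k; rewrite prodE !MmatE. fin sigma tau.
- move=> xu eta He; apply/matrixP => i k; rewrite prodE !MmatE /Pe !He. fin sigma tau.
Qed.
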